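(* Let $G$ be a finite, simple, connected graph and let $k\ge 0$. If $G$ contains a $k$-supported cycle, then $\sigma(G)\ge k$.
   Context: For a spanning tree $T$ of $G$, $\mathrm{Stretch}(G:T)=\max_{uv\in E(G)} d_T(u,v)$, and the stretch of $G$ is $\sigma(G)=\min_T \mathrm{Stretch}(G:T)$, the minimum over all spanning trees $T$ of $G$; $d_G,d_T$ denote graph distances. A cycle $C$ in $G$ is called $k$-supported (for a real number $k$) if $C$ can be partitioned into three edge-disjoint paths $I_1,I_2,I_3$, with $I_1\cap I_2$, $I_2\cap I_3$ and $I_3\cap I_1$ each consisting of exactly one vertex, such that for every triple of vertices $(u_1,u_2,u_3)$ with $u_i\in V(I_i)$ for $i=1,2,3$ we have $\max_{i,j\in\{1,2,3\}} d_G(u_i,u_j)\ge k$. *)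

(* Defs.v *)
From HB Require Import structures.
From mathcomp Require Import all_boot all_order all_algebra.
From mathcomp Require Import boolp.
Set Implicit Arguments. Unset Strict Implicit. Unset Printing Implicit Defensive.
Import Order.TTheory GRing.Theory Num.Theory.

Section Graphs.
Variable T : finType.

Definition simple_graph (e : rel T) := symmetric e /\ irreflexive e.
Definition connected_graph (e : rel T) := forall x y : T, connect e x y.

Definition walkn (r : rel T) (x y : T) (n : nat) : bool :=
  [exists p : n.-tuple T, path r x p && (last x p == y)].

(* graph distance: least n with a walk of length n from x to y
   (shortest walks have < #|T| edges; the value #|T| only occurs if y is
   unreachable from x, which never happens in a connected graph). *)
Definition dist (r : rel T) (x y : T) : nat :=
  find (walkn r x y) (iota 0 #|T|).

(* subgraphs on the full vertex set are given by a set of ordered pairs *)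
Definition srel (S : {set T * T}) : rel T := fun x y => (x, y) \in S.

Definition is_cycle (r : rel T) (c : seq T) : bool :=
  [&& uniq c, 2 < size c & cycle r c].

Definition acyclic (r : rel T) : Prop := forall c : seq T, ~~ is_cycle r c.

Definition spanning_tree (e : rel T) (S : {set T * T}) : Prop :=
  [/\ (forall x y, (x, y) \in S -> e x y),
      (forall x y, (x, y) \in S -> (y, x) \in S),
      (forall x y, connect (srel S) x y) &
      acyclic (srel S)].

Definition stretch (e : rel T) (S : {set T * T}) : nat :=
  \max_(p : T * T | e p.1 p.2) dist (srel S) p.1 p.2.

Definition sigma (e : rel T) : nat :=
  \big[minn/#|T|]_(S : {set T * T} | `[< spanning_tree e S >]) stretch e S.

Definition is_path (r : rel T) (s : seq T) : bool :=
  if s is x :: s' then path r x s' && uniq s else false.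

Definition path_edges (s : seq T) : seq {set T} :=
  [seq [set p.1; p.2] | p <- zip s (behead s)].
Definition cycle_edges (c : seq T) : seq {set T} :=
  if c is x :: _ then path_edges (rcons c x) else [::].

(* C is k-supported: its edge set is partitioned into three edge-disjoint
   paths I1, I2, I3 of G, pairwise meeting in exactly one vertex, and every
   transversal (u1,u2,u3) has max pairwise G-distance >= k. *)
Definition k_supported (R : numDomainType) (e : rel T) (k : R) (c : seq T) : Prop :=
  exists I1 I2 I3 : seq T,
    [/\ [&& is_path e I1, is_path e I2 & is_path e I3],
        perm_eq (path_edges I1 ++ path_edges I2 ++ path_edges I3) (cycle_edges c),
        [/\ #|[predI I1 & I2]| = 1%N, #|[predI I2 & I3]| = 1%N & #|[predI I3 & I1]| = 1%N] &
        forall u1 u2 u3 : T, u1 \in I1 -> u2 \in I2 -> u3 \in I3 ->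
          (k <= (maxn (dist e u1 u2) (maxn (dist e u2 u3) (dist e u1 u3)))%:R)%R].

End Graphs.

(* Main.v *)
Require Import Defs.
From HB Require Import structures.
From mathcomp Require Import all_boot all_order all_algebra.
From mathcomp Require Import boolp.
From mathcomp Require Import zify.
Import Order.TTheory GRing.Theory Num.Theory.

Section Aux.
Variable T : finType.
Implicit Types (r : rel T) (x y z : T) (s p q : seq T).

Lemma rev_walk r x s : symmetric r -> path r x s ->
  exists s', [/\ size s' = size s, path r (last x s) s' & last (last x s) s' = x].
Proof.
move=> sym ps; exists (rev (belast x s)); split.
- by rewrite size_rev size_belast.
- rewrite rev_path; apply: etrans ps; apply: eq_path => a b; exact: sym.
- have := congr1 (fun l => last x l) (congr1 rev (lastI x s)).
  by rewrite rev_rcons /= rev_cons last_rcons.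
Qed.

Lemma dist_le r u s : path r u s -> dist r u (last u s) <= size s.
Proof.
move=> ps; rewrite /dist.
case: (leqP #|T| (size s)) => hs.
  by apply: leq_trans (find_size _ _) _; rewrite size_iota.
rewrite leqNgt; apply/negP => hlt.
have := before_find 0 hlt; rewrite nth_iota // add0n.
suff -> : walkn r u (last u s) (size s) by [].
apply/existsP; exists (in_tuple s); by rewrite /= ps eqxx.
Qed.

Lemma walkn_dist r u v : dist r u v < #|T| ->
  exists s, [/\ size s = dist r u v, path r u s & last u s = v].
Proof.
move=> h; have hs : has (walkn r u v) (iota 0 #|T|) by rewrite has_find size_iota.
have := nth_find 0 hs; rewrite -/(dist r u v) nth_iota // add0n.
case/existsP=> t /andP[pt /eqP lt]; exists t; split => //; exact: size_tuple.
Qed.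

Definition rex r z := fun a b => [&& r a b, a != z & b != z].

Lemma path_rex r z x s : path r x s -> x != z -> z \notin s -> path (rex r z) x s.
Proof.
elim: s x => //= y s IH x /andP[rxy ps] xz; rewrite inE negb_or => /andP[zy zs].
rewrite /rex rxy xz eq_sym zy /=; apply: IH => //; by rewrite eq_sym.
Qed.

Lemma path_rex_notin r z x s : path (rex r z) x s -> z \notin s.
Proof.
elim: s x => //= y s IH x /andP[/and3P[_ _ yz] ps]; rewrite inE negb_or eq_sym yz /=.
exact: IH ps.
Qed.

Lemma sep r z a b : symmetric r -> irreflexive r -> acyclic r ->
  r z a -> r z b -> a != b -> ~~ connect (rex r z) a b.
Proof.
move=> sym irr acy rza rzb ab; apply/negP => /connectP[p pp Eb]; subst b.
case: (shortenP pp) ab rzb => p' pp' up' _ ab rzb {pp}.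
have az : a != z by apply/eqP=> E; move: rza; rewrite E irr.
have zp' : z \notin p' by apply: path_rex_notin pp'.
apply: (negP (acy (z :: a :: p'))).
rewrite /is_cycle /=; apply/and3P; split.
- rewrite inE negb_or eq_sym az zp' /=; exact: up'.
- by case: p' pp' up' zp' ab rzb => //=; rewrite eqxx.
- rewrite rza rcons_path (sub_path _ pp') /=.
    by rewrite sym.
  by move=> u v /and3P[].
Qed.

End Aux.
Arguments rex {T}.
Section Tri.
Variable T : finType.
Variable r : rel T.
Hypothesis sym : symmetric r.
Hypothesis irr : irreflexive r.
Hypothesis acy : acyclic r.

Lemma tri n a p q w : size p + size q + size w < n -> path r a p -> path r a q ->
  path r (last a p) w -> last (last a p) w = last a q ->
  exists m, [/\ m \in a :: p, m \in last a p :: w & m \in a :: q].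
Proof.
elim: n a p q w => // n IH a p q w hs pp pq pw hl.
case Ha: (a \in last a p :: w).
  by exists a; rewrite !mem_head Ha.
case: p hs pp pw hl Ha => [|b p0] hs pp pw hl Ha.
  by rewrite /= mem_head in Ha.
case: q hs pq hl => [|c q0] hs pq hl.
  by have := mem_last (last a (b :: p0)) w; rewrite hl /= Ha.
case Ap: (a \in p0).
  case/splitPr: Ap pp hs pw hl Ha => p1 p2 pp hs pw hl Ha.
  have e1 : last a (b :: p1 ++ a :: p2) = last a p2 by rewrite /= last_cat.
  rewrite e1 in pw hl Ha *.
  have pp2 : path r a p2.
    by move: pp; rewrite -cat1s catA cat_path => /andP[_] /andP[].
  have [|m [m1 m2 m3]] := IH a p2 (c :: q0) w _ pp2 pq pw hl.
    by move: hs; rewrite /= size_cat /=; lia.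
  exists m; split => //.
  by move: m1; rewrite !inE mem_cat inE => /orP[->|->]; rewrite ?orbT.
case Aq: (a \in q0).
  case/splitPr: Aq pq hs hl => q1 q2 pq hs hl.
  have e1 : last a (c :: q1 ++ a :: q2) = last a q2 by rewrite /= last_cat.
  rewrite e1 in hl.
  have pq2 : path r a q2.
    by move: pq; rewrite -cat1s catA cat_path => /andP[_] /andP[].
  have [|m [m1 m2 m3]] := IH a (b :: p0) q2 w _ pp pq2 pw hl.
    by move: hs; rewrite /= size_cat /=; lia.
  exists m; split => //.
  by move: m3; rewrite !inE mem_cat inE => /orP[->|->]; rewrite ?orbT.
move: pp pq => /= /andP[rab pp0] /andP[rac pq0].
case: (eqVneq b c) => [Ebc|nbc].
  subst c.
  have [|m [m1 m2 m3]] := IH b p0 q0 w _ pp0 pq0 pw hl.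
    by move: hs => /=; lia.
  by exists m; split => //; rewrite inE ?m1 ?m3 orbT.
exfalso; apply: (negP (@sep _ r a b c sym irr acy rab rac nbc)).
have ba : b != a by apply/eqP => E; rewrite E irr in rab.
have ca : c != a by apply/eqP => E; rewrite E irr in rac.
have aw : a \notin last b p0 :: w by rewrite /= in Ha; rewrite Ha.
have c1 : connect (rex r a) b (last b p0).
  by apply/connectP; exists p0 => //; apply: path_rex; rewrite ?Ap.
have c2 : connect (rex r a) (last b p0) (last c q0).
  move: aw; rewrite inE negb_or => /andP[la aw].
  apply/connectP; exists w; first by apply: path_rex => //; rewrite eq_sym.
  by rewrite /= in hl; rewrite hl.
have c3 : connect (rex r a) c (last c q0).
  by apply/connectP; exists q0 => //; apply: path_rex; rewrite ?Aq.
have symx : connect_sym (rex r a).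
  apply: sym_connect_sym => u v; rewrite /rex sym.
  by case: (r v u); rewrite /= ?andbF // andbC.
apply: connect_trans c1 _; apply: connect_trans c2 _; by rewrite symx.
Qed.


Lemma path_inA (A : {pred T}) y s : path r y s -> {subset y :: s <= A} ->
  path (fun a b => [&& r a b, a \in A & b \in A]) y s.
Proof.
elim: s y => //= z s IH y /andP[ryz ps] sub.
rewrite ryz !sub ?inE ?eqxx ?orbT //=; apply: IH => // v hv; apply: sub.
by rewrite inE hv orbT.
Qed.

Lemma path_inA_sub (A : {pred T}) y s :
  path (fun a b => [&& r a b, a \in A & b \in A]) y s -> {subset s <= A}.
Proof.
elim: s y => //= z s IH y /andP[/and3P[_ _ zA] ps] v; rewrite inE => /orP[/eqP->//|].
exact: IH ps v.
Qed.

Lemma inwalk x p u v : path r x p -> u \in x :: p -> v \in x :: p ->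
  exists s, [/\ path r u s, last u s = v & {subset u :: s <= x :: p}].
Proof.
move=> pp hu hv.
set rA := fun a b => [&& r a b, a \in x :: p & b \in x :: p].
have pA : path rA x p by apply: path_inA.
have symA : connect_sym rA.
  apply: sym_connect_sym => a b; rewrite /rA sym.
  by case: (r b a); rewrite /= ?andbF // andbC.
have cxu := path_connect pA hu; have cxv := path_connect pA hv.
rewrite symA in cxu.
case/connectP: (connect_trans cxu cxv) => s ps ->.
exists s; split => //.
- by apply: sub_path ps => a b /and3P[].
- move=> y; rewrite inE => /orP[/eqP->//|]; exact: path_inA_sub ps y.
Qed.

Lemma helly x1 p1 x2 p2 x3 p3 : path r x1 p1 -> path r x2 p2 -> path r x3 p3 ->
  (exists z, z \in x1 :: p1 /\ z \in x2 :: p2) ->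
  (exists z, z \in x2 :: p2 /\ z \in x3 :: p3) ->
  (exists z, z \in x3 :: p3 /\ z \in x1 :: p1) ->
  exists m, [/\ m \in x1 :: p1, m \in x2 :: p2 & m \in x3 :: p3].
Proof.
move=> q1 q2 q3 [z12 [a1 a2]] [z23 [b2 b3]] [z31 [c3 c1]].
have [s1 [ps1 ls1 ss1]] := inwalk _ _ _ _ q1 c1 a1.
have [s2 [ps2 ls2 ss2]] := inwalk _ _ _ _ q2 a2 b2.
have [s3 [ps3 ls3 ss3]] := inwalk _ _ _ _ q3 c3 b3.
have [|||m [m1 m2 m3]] := @tri (size s1 + size s3 + size s2).+1 z31 s1 s3 s2 _ ps1 ps3.
- by [].
- by rewrite ls1.
- by rewrite ls1 ls2 ls3.
rewrite ls1 in m2.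
by exists m; split; [apply: ss1 | apply: ss2 | apply: ss3].
Qed.

End Tri.

Section Walk.
Variable T : finType.
Variables (e r : rel T) (t : nat).
Hypothesis sym : symmetric r.
Hypothesis Hedge : forall u v, e u v ->
  exists s, [/\ size s <= t, path r u s & last u s = v].

Definition good (I : seq T) (m : T) :=
  exists u, u \in I /\ exists s, [/\ 2 * size s <= t, path r u s & last u s = m].

Lemma split_walk x s0 m : path r x s0 -> size s0 <= t -> m \in x :: s0 ->
  good [:: x; last x s0] m.
Proof.
move=> ps hs; rewrite inE => /orP[/eqP->|ms].
  by exists x; split; [rewrite mem_head | exists [::]; split].
case/splitPr: ms ps hs => s1 s2 ps hs.
move: ps; rewrite cat_path => /andP[ps1 /= /andP[rm ps2]].
rewrite size_cat /= in hs.
case: (leqP (2 * (size s1).+1) t) => h.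
  exists x; split; first by rewrite mem_head.
  exists (rcons s1 m); split; rewrite ?size_rcons ?rcons_path ?ps1 ?rm ?last_rcons //.
have [s' [hs' ps' ls']] := rev_walk _ _ _ _ sym ps2.
exists (last m s2); split; first by rewrite last_cat /= !inE eqxx orbT.
exists s'; split => //; rewrite hs'; move: hs h; rewrite !mulSn mul0n !addn0 !addnS; move: (size s1) (size s2) => a b. lia.
Qed.

Lemma walk_of_path x xs : path e x xs ->
  exists p, [/\ path r x p, last x p = last x xs, {subset x :: xs <= x :: p}
    & forall m, m \in x :: p -> good (x :: xs) m].
Proof.
elim: xs x => [|y ys IH] x /=.
  move=> _; exists [::]; split => // m; rewrite inE => /eqP->.
  by exists x; split; [rewrite mem_head | exists [::]; split].
move=> /andP[exy pys].
have [p' [pp' lp' sp' gp']] := IH y pys.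
have [s0 [hs0 ps0 ls0]] := Hedge _ _ exy.
exists (s0 ++ p'); split.
- by rewrite cat_path ps0 ls0.
- by rewrite last_cat ls0.
- move=> v; rewrite inE => /orP[/eqP->|]; first by rewrite mem_head.
  move/sp'; rewrite inE => /orP[/eqP->|vp].
    by rewrite -ls0 -cat_cons mem_cat mem_last.
  by rewrite inE mem_cat vp !orbT.
- move=> m; rewrite -cat_cons mem_cat => /orP[ms|mp].
    have [u [hu hgu]] := split_walk _ _ _ ps0 hs0 ms.
    exists u; split => //; move: hu; rewrite ls0 !inE => /orP[->|->] //; by rewrite orbT.
  have [u [hu hgu]] := gp' m ltac:(by rewrite inE mp orbT).
  by exists u; split => //; rewrite inE hu orbT.
Qed.

End Walk.

Arguments walk_of_path {T e r t} sym Hedge {x xs}.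
Arguments helly {T r} sym irr acy {x1 p1 x2 p2 x3 p3}.
Arguments rev_walk {T r x s}.
Arguments dist_le {T r u s}.
Arguments walkn_dist {T r u v}.

Lemma half_sum a b t : 2 * a <= t -> 2 * b <= t -> a + b <= t.
Proof. lia. Qed.

Lemma dist_leT (T : finType) (r : rel T) u v : dist r u v <= #|T|.
Proof. by apply: leq_trans (find_size _ _) _; rewrite size_iota. Qed.

Lemma stretch_bound (T : finType) (e : rel T) (R : realFieldType) (k : R)
  (I1 I2 I3 : seq T) (S : {set T * T}) :
  simple_graph e -> spanning_tree e S ->
  [&& is_path e I1, is_path e I2 & is_path e I3] ->
  [/\ #|[predI I1 & I2]| = 1%N, #|[predI I2 & I3]| = 1%N & #|[predI I3 & I1]| = 1%N] ->
  (forall u1 u2 u3 : T, u1 \in I1 -> u2 \in I2 -> u3 \in I3 ->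
          (k <= (maxn (dist e u1 u2) (maxn (dist e u2 u3) (dist e u1 u3)))%:R)%R) ->
  (k <= (stretch e S)%:R)%R.
Proof.
move=> [esym eirr] [hS1 hS2 hS3 hS4] hp [c12 c23 c31] hk.
move Et: (stretch e S) => t.
case: I1 hp hk c12 c31 => [|x1 xs1]; first by rewrite /=.
case: I2 c23 => [|x2 xs2] c23; first by rewrite /= andbF.
case: I3 c23 => [|x3 xs3] c23; first by rewrite /= !andbF.
move=> /and3P[/andP[pe1 _] /andP[pe2 _] /andP[pe3 _]] hk c12 c31.
case: (leqP #|T| t) => ht.
  apply: le_trans (hk x1 x2 x3 (mem_head _ _) (mem_head _ _) (mem_head _ _)) _.
  rewrite ler_nat; apply: leq_trans ht.
  by rewrite !geq_max !dist_leT.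
set r := srel S.
have rsym : symmetric r by move=> a b; apply/idP/idP => /hS2.
have rirr : irreflexive r by move=> a; apply/negP => /hS1; rewrite eirr.
have Hedge : forall u v, e u v -> exists s, [/\ size s <= t, path r u s & last u s = v].
  move=> u v euv.
  have hd : dist r u v <= t.
    rewrite -Et; exact: (@leq_bigmax_cond _ (fun p : T * T => e p.1 p.2)
                 (fun p => dist (srel S) p.1 p.2) (u, v) euv).
  have [s [hs ps ls]] := walkn_dist (leq_ltn_trans hd ht).
  by exists s; rewrite hs.
have [p1 [pp1 _ sp1 gp1]] := walk_of_path rsym Hedge pe1.
have [p2 [pp2 _ sp2 gp2]] := walk_of_path rsym Hedge pe2.
have [p3 [pp3 _ sp3 gp3]] := walk_of_path rsym Hedge pe3.
have inter : forall (A B : seq T) (P Q : seq T), #|[predI A & B]| = 1%N ->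
    {subset A <= P} -> {subset B <= Q} -> exists z, z \in P /\ z \in Q.
  move=> A B P Q hc sA sB.
  have : (0 < #|[predI A & B]|)%N by rewrite hc.
  case/card_gt0P => z; rewrite inE => /andP[zA zB].
  by exists z; split; [apply: sA | apply: sB].
have [m [m1 m2 m3]] := helly rsym rirr hS4 pp1 pp2 pp3 (inter _ _ _ _ c12 sp1 sp2)
  (inter _ _ _ _ c23 sp2 sp3) (inter _ _ _ _ c31 sp3 sp1).
have [u1 [hu1 [s1 [hs1 ps1 ls1]]]] := gp1 m m1.
have [u2 [hu2 [s2 [hs2 ps2 ls2]]]] := gp2 m m2.
have [u3 [hu3 [s3 [hs3 ps3 ls3]]]] := gp3 m m3.
have dd : forall u v su sv, (2 * size su <= t)%N -> (2 * size sv <= t)%N ->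
    path r u su -> last u su = m -> path r v sv -> last v sv = m -> (dist e u v <= t)%N.
  move=> u v su sv h1 h2 pu lu pv lv.
  have [s' [hs' ps' ls']] := rev_walk rsym pv.
  rewrite lv in ps' ls'.
  have pe : path e u (su ++ s').
    apply: (sub_path (e := r)); first by move=> a b /hS1.
    by rewrite cat_path pu lu.
  have := dist_le pe; rewrite last_cat lu ls' size_cat hs'.
  move=> hd; apply: leq_trans hd _.
  exact: half_sum h1 h2.
apply: le_trans (hk u1 u2 u3 hu1 hu2 hu3) _.
rewrite ler_nat !geq_max.
by rewrite (dd _ _ _ _ hs1 hs2 ps1 ls1 ps2 ls2) (dd _ _ _ _ hs2 hs3 ps2 ls2 ps3 ls3)
  (dd _ _ _ _ hs1 hs3 ps1 ls1 ps3 ls3).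
Qed.

Theorem mainTheorem1 (T : finType) (e : rel T) (R : realFieldType) (k : R) :
  simple_graph e -> connected_graph e -> (0 <= k)%R ->
  (exists c : seq T, is_cycle e c /\ k_supported e k c) ->
  (k <= (sigma e)%:R)%R.
Proof.
move=> sg _ _ [c [_ [I1 [I2 [I3 [hp _ hc hk]]]]]].
have knT : (k <= #|T|%:R)%R.
  clear hc.
  case: I1 hp hk => [|x1 xs1]; first by [].
  case: I2 => [|x2 xs2]; first by rewrite /= andbF.
  case: I3 => [|x3 xs3]; first by rewrite /= !andbF.
  move=> _ hk.
  apply: le_trans (hk x1 x2 x3 (mem_head _ _) (mem_head _ _) (mem_head _ _)) _.
  by rewrite ler_nat !geq_max !dist_leT.
rewrite /sigma; apply: (big_ind (fun x : nat => (k <= x%:R)%R)) => //.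
  move=> a b ha hb; rewrite /minn; by case: ifP.
move=> S /asboolP hS.
exact: stretch_bound sg hS hp hc hk.
Qed.
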